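(* (Working in $\mathbf{ZF}$.) Let $X$ be a weakly normal generalized topological space such that $X_{top}$ is locally compact and not compact. Then: (i) the collection $\mathcal C_0=\{A\in\mathrm{Cl}_X: A\in\mathrm{Kc}_X\ \text{or}\ \forall B\in\mathrm{Cl}_X\,[B\subseteq X\setminus A\Rightarrow B\in\mathrm{Kc}_X]\}$ is a Wallman base for $X_{top}$ such that the Wallman space $\mathcal W(X,\mathcal C_0)$ is compact; (ii) if $\mathcal W(X,\mathcal C_0)^S$ denotes $\mathcal W(X,\mathcal C_0)$ equipped with the strongest generalized topology associated with $\mathrm{Cov}_X$, then the strict compactification $\mathcal W(X,\mathcal C_0)^S$ of $X$ is strictly equivalent with the Alexandroff strict compactification $\hat X$ of $X$.
   Context: A generalized topological space (gts) $(X,\mathrm{Op}_X,\mathrm{Cov}_X)$ is in the sense of Delfs–Knebusch ($\mathrm{Op}_X$ contains $\emptyset,X$, closed under finite unions and intersections; $\mathrm{Cov}_X$ a collection of families of open sets satisfying the Delfs–Knebusch axioms). $\mathrm{Cl}_X$ = complements of open sets; $X_{top}$ = $X$ with topology generated by $\mathrm{Op}_X$. $X$ is weakly normal if disjoint sets, each a singleton or in $\mathrm{Cl}_X$, lie in disjoint open sets. $\mathrm{Kc}_X$ = members of $\mathrm{Cl}_X$ compact in $X_{top}$. A Wallman base of a topological space $T$ is a closed base $\mathcal C$ (for each closed $A$ and $x\notin A$ some $C\in\mathcal C$ has $A\subseteq C\not\ni x$) that is closed under finite unions and intersections, such that for every $A$ which is a singleton or closed and every $x\notin A$ there is $C\in\mathcal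 C$ with $x\in C\subseteq T\setminus A$, and for disjoint $A_1,A_2\in\mathcal C$ there are $C_1,C_2\in\mathcal C$ with $C_1\cup C_2=T$, $A_i\cap C_i=\emptyset$. $\mathcal W(X,\mathcal C)$ is the set of ultrafilters (maximal filters) in $\mathcal C$ with closed base $\{[A]_{\mathcal C}:A\in\mathcal C\}$, $[A]_{\mathcal C}=\{p:A\in p\}$; it is regarded as a compactification of $X_{top}$ via $w(x)=\{A\in\mathcal C:x\in A\}$ (identify $x$ with $w(x)$). For a compactification $\alpha X$ of $X_{top}$ with topology $\tau$, the strongest generalized topology associated with $\mathrm{Cov}_X$ has open sets $\mathrm{Op}^S=\{V\in\tau:V\cap X\in\mathrm{Op}_X\}$ and admissible families $\mathrm{Cov}^S=\{\mathcal V\subseteq\mathrm{Op}^S:\{V\cap X:V\in\mathcal V\}\in\mathrm{Cov}_X\}$. The Alexandroff strict compactification is $\hat X=X\cup\{\infty\}$ ($\infty\notin X$) with $\mathrm{Op}_{\hat X}=\mathrm{Op}_X\cup\{\hat X\setminus C:C\in\mathrm{Kc}_X\}$ and $\mathrm{Cov}_{\hat X}=\{\mathcal U\subseteq\mathrm{Op}_{\hat X}:\{U\cap X:U\in\mathcal U\}\in\mathrm{Cov}_X\}$. Strict compactifications $(\alpha X,\alpha)$, $(\gamma X,\gamma)$ of $X$ are strictly equivalent if there is a bijection $h:\alpha X\to\gamma X$ with $h$ and $h^{-1}$ strictly continuous (preimages of admissible families are admissible) and $h\circ\alpha=\gamma$. *)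

(* Defs.v *)
From mathcomp Require Import all_boot.
From mathcomp Require Import boolp classical_sets.
From Stdlib Require Import List.


Unset Strict Implicit.
Unset Printing Implicit Defensive.

Local Open Scope classical_set_scope.

Definition bigU {T : Type} (F : set (set T)) : set T :=
  fun x => exists A, F A /\ A x.

Definition finite_family {T : Type} (F : set (set T)) : Prop :=
  exists l : list (set T), forall A, F A <-> List.In A l.

Definition is_singleton {T : Type} (A : set T) : Prop := exists x, A = [set x].

(** Delfs--Knebusch generalized topological space (axioms as in Piekosz). *)
Record is_gts {X : Type} (Op : set (set X)) (Cov : set (set (set X))) : Prop := {
  gts_Op0 : Op set0;
  gts_OpT : Op setT;
  gts_OpU : forall U V, Op U -> Op V -> Op (U `|` V);
  gts_OpI : forall U V, Op U -> Op V -> Op (U `&` V);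
  gts_CovOp : forall UU, Cov UU -> UU `<=` Op;
  gts_CovU : forall UU, Cov UU -> Op (bigU UU);
  gts_fin : forall UU, UU `<=` Op -> finite_family UU -> Cov UU;
  gts_restr : forall UU V, Cov UU -> Op V -> Cov ((fun U => U `&` V) @` UU);
  gts_trans : forall UU (VV : set X -> set (set X)), Cov UU ->
      (forall U, UU U -> Cov (VV U) /\ bigU (VV U) = U) ->
      Cov (fun W => exists U, UU U /\ VV U W);
  gts_refine : forall UU VV, UU `<=` Op -> Cov VV -> bigU UU = bigU VV ->
      (forall V, VV V -> exists U, UU U /\ V `<=` U) -> Cov UU;
  gts_reg : forall UU VV, UU `<=` Op -> Cov VV -> bigU UU = bigU VV ->
      (forall V, VV V -> Cov ((fun U => U `&` V) @` UU)) -> Cov UU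
}.

Definition Cl {X : Type} (Op : set (set X)) : set (set X) := fun A => Op (~` A).

(** Open sets of X_top: the topology generated by Op (unions of members of Op). *)
Definition top_open {X : Type} (Op : set (set X)) : set (set X) :=
  fun A => forall x, A x -> exists U, Op U /\ U x /\ U `<=` A.

Definition top_closed {T : Type} (opn : set (set T)) : set (set T) :=
  fun A => opn (~` A).

Definition compact_in {T : Type} (opn : set (set T)) (K : set T) : Prop :=
  forall F : set (set T), F `<=` opn -> K `<=` bigU F ->
    exists l : list (set T), (forall A, List.In A l -> F A) /\
      K `<=` (fun x => exists A, List.In A l /\ A x).

Definition locally_compact {T : Type} (opn : set (set T)) : Prop :=
  forall x, exists U K, opn U /\ U x /\ U `<=` K /\ compact_in opn K.

Definition weakly_normal {X : Type} (Op : set (set X)) : Prop :=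
  forall A B, (is_singleton A \/ Cl Op A) -> (is_singleton B \/ Cl Op B) ->
    A `&` B = set0 ->
    exists U V, Op U /\ Op V /\ A `<=` U /\ B `<=` V /\ U `&` V = set0.

Definition Kc {X : Type} (Op : set (set X)) : set (set X) :=
  fun A => Cl Op A /\ compact_in (top_open Op) A.

Definition C0 {X : Type} (Op : set (set X)) : set (set X) :=
  fun A => Cl Op A /\
    (Kc Op A \/ forall B, Cl Op B -> B `<=` ~` A -> Kc Op B).

Definition wallman_base {T : Type} (opn : set (set T)) (C : set (set T)) : Prop :=
  [/\ (forall A, C A -> top_closed opn A),
      (forall A x, top_closed opn A -> ~ A x ->
          exists D, C D /\ A `<=` D /\ ~ D x),
      [/\ C set0, C setT,
          (forall A B, C A -> C B -> C (A `|` B)) &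
          (forall A B, C A -> C B -> C (A `&` B))],
      (forall A x, (is_singleton A \/ top_closed opn A) -> ~ A x ->
          exists D, C D /\ D x /\ D `<=` ~` A) &
      (forall A1 A2, C A1 -> C A2 -> A1 `&` A2 = set0 ->
          exists C1 C2, [/\ C C1, C C2, C1 `|` C2 = setT,
                            A1 `&` C1 = set0 & A2 `&` C2 = set0])].

Definition Cfilter {T : Type} (C : set (set T)) (p : set (set T)) : Prop :=
  [/\ p `<=` C, (exists A, p A), ~ p set0,
      (forall A B, p A -> p B -> p (A `&` B)) &
      (forall A B, p A -> C B -> A `<=` B -> p B)].

Definition Cultrafilter {T : Type} (C : set (set T)) (p : set (set T)) : Prop :=
  Cfilter C p /\ (forall q, Cfilter C q -> p `<=` q -> q = p).

Definition wallman_pt {T : Type} (C : set (set T)) : Type :=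
  {p : set (set T) | Cultrafilter C p}.

Definition wbase {T : Type} (C : set (set T)) (A : set T) : set (wallman_pt C) :=
  fun p => proj1_sig p A.

Definition wallman_open {T : Type} (C : set (set T)) : set (set (wallman_pt C)) :=
  fun U => forall p, U p ->
    exists A, C A /\ ~ wbase C A p /\ ~` (wbase C A) `<=` U.

Definition wmap {T : Type} (C : set (set T)) (x : T) : set (set T) :=
  fun A => C A /\ A x.

(** V ∩ X, X identified with its image under w. *)
Definition wtrace {T : Type} (C : set (set T)) (V : set (wallman_pt C)) : set T :=
  fun x => exists p, V p /\ proj1_sig p = wmap C x.

(** Strongest generalized topology on W(X,C) associated with Cov_X. *)
Definition OpS {X : Type} (Op : set (set X)) (C : set (set X)) :
    set (set (wallman_pt C)) :=
  fun V => wallman_open C V /\ Op (wtrace C V).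

Definition CovS {X : Type} (Op : set (set X)) (Cov : set (set (set X)))
    (C : set (set X)) : set (set (set (wallman_pt C))) :=
  fun VV => VV `<=` OpS Op C /\ Cov ((fun V => wtrace C V) @` VV).

(** Alexandroff strict compactification: carrier option X, None = infinity. *)
Definition OpHat {X : Type} (Op : set (set X)) : set (set (option X)) :=
  fun U => (exists V, Op V /\ U = Some @` V) \/
           (exists K, Kc Op K /\ U = ~` (Some @` K)).

Definition CovHat {X : Type} (Op : set (set X)) (Cov : set (set (set X))) :
    set (set (set (option X))) :=
  fun UU => UU `<=` OpHat Op /\ Cov ((fun U => Some @^-1` U) @` UU).

Definition strictly_continuous {A B : Type} (CovA : set (set (set A)))
    (CovB : set (set (set B))) (f : A -> B) : Prop :=
  forall UU, CovB UU -> CovA ((fun U => f @^-1` U) @` UU).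

(* Main.v *)
Require Import Defs.
From mathcomp Require Import all_boot.
From mathcomp Require Import boolp classical_sets.
From Stdlib Require Import List.

Set Implicit Arguments.
Unset Strict Implicit.
Local Open Scope classical_set_scope.

Lemma seteqI {T : Type} (A B : set T) : (forall x, A x <-> B x) -> A = B.
Proof. move=> H; apply: funext => x; apply: propext; exact: H. Qed.

Definition lunion {T : Type} (l : list (set T)) : set T :=
  fun x => exists A, List.In A l /\ A x.

Lemma list_filter_ex {T : Type} (P Q : set T -> Prop) (l : list (set T)) :
  (forall A, List.In A l -> P A \/ Q A) ->
  exists l', (forall A, List.In A l' -> P A) /\
             (forall A, List.In A l -> P A -> List.In A l').
Proof.
elim: l => [|a l IH] H.
  by exists nil; split.
have [l' [H1 H2]] : exists l', (forall A, List.In A l' -> P A) /\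
             (forall A, List.In A l -> P A -> List.In A l').
  by apply: IH => A HA; apply: H; right.
case: (pselect (P a)) => Pa.
- exists (a :: l'); split.
  + by move=> A [<-|HA] //; apply: H1.
  + by move=> A [<-|HA] PA; [left | right; apply: H2].
- exists l'; split => // A [<-|HA] PA //.
  by apply: H2.
Qed.

Section S.
Variable X : Type.
Variable Op : set (set X).
Variable Cov : set (set (set X)).
Hypothesis Hg : is_gts Op Cov.
Hypothesis Hwn : weakly_normal Op.
Hypothesis Hlc : locally_compact (top_open Op).
Hypothesis Hnc : ~ compact_in (top_open Op) setT.

Lemma gts_opU U V : Op U -> Op V -> Op (U `|` V). Proof. exact: (@gts_OpU X Op Cov Hg). Qed.
Lemma gts_opI U V : Op U -> Op V -> Op (U `&` V). Proof. exact: (@gts_OpI X Op Cov Hg). Qed.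
Lemma gts_opT : Op setT. Proof. exact: (@gts_OpT X Op Cov Hg). Qed.
Lemma gts_op0 : Op set0. Proof. exact: (@gts_Op0 X Op Cov Hg). Qed.

Local Notation topO := (top_open Op).
Local Notation cpt := (compact_in (top_open Op)).

Lemma Op_top U : Op U -> topO U.
Proof. rewrite /top_open => HU x Ux; exists U; split => //; split => // y. Qed.

Lemma ClI A B : Cl Op A -> Cl Op B -> Cl Op (A `&` B).
Proof. rewrite /Cl setCI => HA HB. exact: gts_opU. Qed.
Lemma ClU A B : Cl Op A -> Cl Op B -> Cl Op (A `|` B).
Proof. rewrite /Cl setCU => HA HB; exact: gts_opI. Qed.
Lemma ClC U : Op U -> Cl Op (~` U).
Proof. by rewrite /Cl setCK. Qed.
Lemma Cl0 : Cl Op set0.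
Proof. rewrite /Cl setC0; exact: gts_opT. Qed.
Lemma ClT : Cl Op setT.
Proof. rewrite /Cl setCT; exact: gts_op0. Qed.

Lemma cpt_U A B : cpt A -> cpt B -> cpt (A `|` B).
Proof.
move=> HA HB; rewrite /compact_in => F HF Hcov.
have [lA [lA1 lA2]] := HA F HF (fun x Ax => Hcov x (or_introl Ax)).
have [lB [lB1 lB2]] := HB F HF (fun x Bx => Hcov x (or_intror Bx)).
exists (lA ++ lB); split.
  by move=> C HC; case: (in_app_or _ _ _ HC) => ?; [apply: lA1 | apply: lB1].
move=> x [Ax|Bx].
  by have [C [? ?]] := lA2 x Ax; exists C; split => //; apply: in_or_app; left.
by have [C [? ?]] := lB2 x Bx; exists C; split => //; apply: in_or_app; right.
Qed.

Lemma cpt_0 : cpt set0.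
Proof. by rewrite /compact_in => F _ _; exists nil; split => // x. Qed.

Lemma cpt_closed B K : Cl Op B -> cpt K -> B `<=` K -> cpt B.
Proof.
move=> HB HK BK; rewrite /compact_in => F HF Hcov.
pose F' := fun V => F V \/ V = ~` B.
have [l [l1 l2]] : exists l : list (set X), (forall A, List.In A l -> F' A) /\
    K `<=` (fun x => exists A, List.In A l /\ A x).
  apply: HK.
    by move=> V [FV|->]; [apply: HF | apply: Op_top].
  move=> x Kx; case: (pselect (B x)) => Bx.
    by have [V [FV Vx]] := Hcov x Bx; exists V; split => //; left.
  by exists (~` B); split => //; right.
have [l' [l'1 l'2]] := @list_filter_ex _ F (fun V => V = ~` B) l l1.
exists l'; split => // x Bx.
have [V [Vl Vx]] := l2 x (BK x Bx).
case: (l1 V Vl) => [FV|EV].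
  by exists V; split => //; apply: l'2.
by move: Vx; rewrite EV.
Qed.

Lemma LCop x : exists V K, Op V /\ V x /\ V `<=` K /\ cpt K.
Proof.
have [U [K [HU [Ux [UK HK]]]]] := Hlc x.
have [V [OV [Vx VU]]] := HU x Ux.
exists V, K; repeat split => //.
by move=> y /VU /UK.
Qed.

Lemma LCnbhd x U : Op U -> U x -> exists D, Kc Op D /\ D x /\ D `<=` U.
Proof.
move=> OU Ux.
have [V [K [OV [Vx [VK HK]]]]] := LCop x.
have OW : Op (V `&` U) by apply: gts_opI.
have [P [Q [OP [OQ [xP [WQ PQ]]]]]] :
  exists P Q, Op P /\ Op Q /\ [set x] `<=` P /\ ~` (V `&` U) `<=` Q /\ P `&` Q = set0.
  apply: Hwn.
  - by left; exists x.
  - by right; rewrite /Cl setCK.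
  - apply: seteqI => y; split => // [[/= -> H]]; exact: H.
have DW : ~` Q `<=` V `&` U.
  by move=> y /= nQ; apply: contrapT => nW; apply: nQ; apply: WQ.
exists (~` Q); split; [split|split].
- exact: ClC.
- apply: (cpt_closed (ClC OQ) HK) => y /DW [] /VK //.
- move=> /= Qx.
  have : (P `&` Q) x by split => //; apply: xP.
  by rewrite PQ.
- by move=> y /DW [].
Qed.


Definition cot (A : set X) := forall B, Cl Op B -> B `<=` ~` A -> Kc Op B.

Lemma lunion_nbhd (l : list (set X)) :
  (forall W, List.In W l -> Op W /\ exists K, W `<=` K /\ cpt K) ->
  Op (lunion l) /\ exists K, lunion l `<=` K /\ cpt K.
Proof.
elim: l => [|a l IH] H.
  have -> : lunion (nil : list (set X)) = set0 by apply: seteqI => x; split => // [[A [[] _]]].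
  split; first exact: gts_op0.
  by exists set0; split => //; exact: cpt_0.
have [OL [K [LK HK]]] := IH (fun W HW => H W (or_intror HW)).
have [Oa [Ka [aK HKa]]] := H a (or_introl erefl).
have -> : lunion (a :: l) = a `|` lunion l.
  apply: seteqI => x; split.
    by move=> [A [[<-|HA] Ax]]; [left | right; exists A].
  by move=> [ax|[A [HA Ax]]]; [exists a; split => //; left | exists A; split => //; right].
split; first exact: gts_opU.
exists (Ka `|` K); split; last exact: cpt_U.
by move=> x [/aK|/LK] ?; [left|right].
Qed.

Lemma cpt_nbhd A : cpt A -> exists P K, Op P /\ A `<=` P /\ P `<=` K /\ cpt K.
Proof.
move=> HA.
pose F := fun W => Op W /\ exists K, W `<=` K /\ cpt K.
have [l [l1 l2]] := HA F (fun W HW => Op_top (proj1 HW))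
  (fun x _ => match LCop x with ex_intro V (ex_intro K (conj OV (conj Vx (conj VK HK)))) =>
     ex_intro _ V (conj (conj OV (ex_intro _ K (conj VK HK))) Vx) end).
have [OL [K [LK HK]]] := lunion_nbhd l1.
by exists (lunion l), K; repeat split.
Qed.

Lemma Kc_not_cot A : Kc Op A -> cot A -> False.
Proof.
move=> [ClA HA] cA.
have [P [K [OP [AP [PK HK]]]]] := cpt_nbhd HA.
have [_ HcP] := cA (~` P) (ClC OP) (fun x nPx Ax => nPx (AP x Ax)).
apply: Hnc; apply: (cpt_closed ClT (cpt_U HK HcP)) => x _.
by case: (pselect (P x)) => Px; [left; apply: PK | right].
Qed.

Lemma cot_I A B : Cl Op A -> Cl Op B -> cot A -> cot B -> cot (A `&` B).
Proof.
move=> ClA ClB cA cB E ClE EAB.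
have [P [Q [OP [OQ [EAP [EBQ PQ]]]]]] :
  exists P Q, Op P /\ Op Q /\ E `&` A `<=` P /\ E `&` B `<=` Q /\ P `&` Q = set0.
  apply: Hwn; [right; exact: ClI | right; exact: ClI |].
  apply: seteqI => x; split => // [[[Ex Ax] [_ Bx]]].
  exact: (EAB x Ex (conj Ax Bx)).
have [_ H1] := cA (E `&` ~` P) (ClI ClE (ClC OP))
  (fun x H Ax => proj2 H (EAP x (conj (proj1 H) Ax))).
have [_ H2] := cB (E `&` ~` Q) (ClI ClE (ClC OQ))
  (fun x H Bx => proj2 H (EBQ x (conj (proj1 H) Bx))).
split => //; apply: (cpt_closed ClE (cpt_U H1 H2)) => x Ex.
case: (pselect (P x)) => Px; [right|left] => //.
split => // Qx.
have : (P `&` Q) x by split.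
by rewrite PQ.
Qed.

Lemma cot_up A B : cot A -> A `<=` B -> cot B.
Proof. by move=> cA AB E ClE EB; apply: cA => // x /EB nB Ax; apply: nB; apply: AB. Qed.

Lemma C0_0 : C0 Op set0.
Proof. by split; [exact: Cl0 | left; split; [exact: Cl0 | exact: cpt_0]]. Qed.

Lemma C0_T : C0 Op setT.
Proof.
split; first exact: ClT.
right => B ClB BT; split => //.
apply: (cpt_closed ClB cpt_0) => x /BT H; case: (H I).
Qed.

Lemma C0_Kc A : Kc Op A -> C0 Op A.
Proof. by move=> H; split; [exact: (proj1 H) | left]. Qed.

Lemma C0_cot A : Cl Op A -> cot A -> C0 Op A.
Proof. by move=> H1 H2; split => //; right. Qed.

Lemma C0I A B : C0 Op A -> C0 Op B -> C0 Op (A `&` B).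
Proof.
move=> [ClA [KA|cA]] [ClB [KB|cB]].
- apply: C0_Kc; split; first exact: ClI.
  by apply: (cpt_closed (ClI ClA ClB) (proj2 KA)) => x [].
- apply: C0_Kc; split; first exact: ClI.
  by apply: (cpt_closed (ClI ClA ClB) (proj2 KA)) => x [].
- apply: C0_Kc; split; first exact: ClI.
  by apply: (cpt_closed (ClI ClA ClB) (proj2 KB)) => x [].
- by apply: C0_cot; [exact: ClI | exact: cot_I].
Qed.

Lemma C0U A B : C0 Op A -> C0 Op B -> C0 Op (A `|` B).
Proof.
move=> [ClA [KA|cA]] [ClB [KB|cB]].
- apply: C0_Kc; split; first exact: ClU.
  exact: cpt_U (proj2 KA) (proj2 KB).
- by apply: C0_cot; [exact: ClU | apply: cot_up cB _ => x ?; right].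
- by apply: C0_cot; [exact: ClU | apply: cot_up cA _ => x ?; left].
- by apply: C0_cot; [exact: ClU | apply: cot_up cA _ => x ?; left].
Qed.

Lemma side A P : C0 Op A -> Op P -> A `<=` P ->
  exists P', Op P' /\ A `<=` P' /\ P' `<=` P /\ C0 Op (~` P').
Proof.
move=> [ClA [KA|cA]] OP AP.
- have [P0 [K [OP0 [AP0 [P0K HK]]]]] := cpt_nbhd (proj2 KA).
  exists (P `&` P0); split; first exact: gts_opI.
  split; first by move=> x Ax; split; [apply: AP | apply: AP0].
  split; first by move=> x [].
  apply: C0_cot; first exact: ClC (gts_opI OP OP0).
  move=> B ClB BP; split => //.
  apply: (cpt_closed ClB HK) => x /BP /contrapT [_ /P0K] //.
- exists P; split => //; split => //; split => //.
  apply: C0_Kc; apply: cA; first exact: ClC.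
  by move=> x nPx Ax; apply: nPx; apply: AP.
Qed.

Lemma cot_nbhd x U : Op U -> U x ->
  exists D, C0 Op D /\ cot D /\ ~ D x /\ ~` U `<=` D.
Proof.
move=> OU Ux.
have [V [K [OV [Vx [VK HK]]]]] := LCop x.
exists (~` (V `&` U)).
have cD : cot (~` (V `&` U)).
  move=> B ClB BD; split => //.
  by apply: (cpt_closed ClB HK) => y /BD /contrapT [/VK].
split; first exact: C0_cot (ClC (gts_opI OV OU)) cD.
split => //; split; first by move=> /= H; apply: H.
by move=> y nUy [_ Uy].
Qed.


Definition pinf : set (set X) := fun A => C0 Op A /\ cot A.

Lemma open_sub A x : top_closed topO A -> ~ A x ->
  exists U, Op U /\ U x /\ U `<=` ~` A.
Proof. by move=> HA nAx; have [U [OU [Ux UA]]] := HA x nAx; exists U. Qed.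

Lemma wb : wallman_base topO (C0 Op).
Proof.
split.
- by move=> A [ClA _]; exact: Op_top.
- move=> A x HA nAx.
  have [U [OU [Ux UA]]] := open_sub HA nAx.
  have [D [C0D [_ [nDx UD]]]] := cot_nbhd OU Ux.
  exists D; split => //; split => // y Ay; apply: UD => Uy; exact: UA y Uy Ay.
- split; [exact: C0_0 | exact: C0_T | exact: C0U | exact: C0I].
- move=> A x HA nAx.
  have [U [OU [Ux UA]]] : exists U, Op U /\ U x /\ U `<=` ~` A.
    case: HA => [[y Ay]|HA]; last exact: open_sub.
    subst A.
    have [P [Q [OP [OQ [xP [yQ PQ]]]]]] :
      exists P Q, Op P /\ Op Q /\ [set x] `<=` P /\ [set y] `<=` Q /\ P `&` Q = set0.
      apply: Hwn; [left; exists x | left; exists y |] => //.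
      apply: seteqI => z; split => // [[/= zx zy]]; apply: nAx => /=.
      by rewrite -zx -zy.
    exists P; split => //; split; first exact: xP.
    move=> z Pz /= zy; subst z.
    have : (P `&` Q) y by split => //; exact: yQ.
    by rewrite PQ.
  have [D [KD [Dx DU]]] := LCnbhd OU Ux.
  exists D; split; first exact: C0_Kc.
  by split => // y /DU /UA.
- move=> A1 A2 H1 H2 D12.
  have [P [Q [OP [OQ [AP [AQ PQ]]]]]] := Hwn (or_intror (proj1 H1)) (or_intror (proj1 H2)) D12.
  have [P' [OP' [AP' [P'P C1]]]] := side H1 OP AP.
  have [Q' [OQ' [AQ' [Q'Q C2]]]] := side H2 OQ AQ.
  exists (~` P'), (~` Q'); split => //.
  + apply: seteqI => x; split => // _.
    case: (pselect (P' x)) => Px; [right|left] => // Qx.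
    have : (P `&` Q) x by split; [exact: P'P | exact: Q'Q].
    by rewrite PQ.
  + by apply: seteqI => x; split => // [[Ax nPx]]; apply: nPx; exact: AP'.
  + by apply: seteqI => x; split => // [[Ax nPx]]; apply: nPx; exact: AQ'.
Qed.

Lemma Cfilter_wmap x : Cfilter (C0 Op) (wmap (C0 Op) x).
Proof.
split.
- by move=> A [].
- by exists setT; split => //; exact: C0_T.
- by move=> [_ []].
- by move=> A B [CA Ax] [CB Bx]; split; [exact: C0I | split].
- by move=> A B [CA Ax] CB AB; split => //; exact: AB.
Qed.

Lemma Cfilter_pinf : Cfilter (C0 Op) pinf.
Proof.
split.
- by move=> A [].
- exists setT; split; first exact: C0_T.
  move=> B ClB BT; split => //; apply: (cpt_closed ClB cpt_0) => x /BT H; case: (H I).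
- move=> [_ c0]; apply: (Kc_not_cot _ c0); split; [exact: Cl0 | exact: cpt_0].
- by move=> A B [CA cA] [CB cB]; split; [exact: C0I | apply: cot_I => //; [exact: proj1 CA| exact: proj1 CB]].
- by move=> A B [CA cA] CB AB; split => //; exact: cot_up AB.
Qed.

Lemma sep_pt x A : C0 Op A -> ~ A x -> exists D, C0 Op D /\ D x /\ A `&` D = set0.
Proof.
move=> CA nAx.
have [_ _ _ H4 _] := wb.
have [D [CD [Dx DA]]] := H4 A x (or_intror (Op_top (proj1 CA))) nAx.
exists D; split => //; split => //.
by apply: seteqI => y; split => // [[Ay Dy]]; exact: DA y Dy Ay.
Qed.

Lemma UF_wmap x : Cultrafilter (C0 Op) (wmap (C0 Op) x).
Proof.
split; first exact: Cfilter_wmap.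
move=> q [Hsub Hne Hn0 HI Hup] pq.
apply: seteqI => A; split; last exact: pq.
move=> qA; split; first exact: Hsub.
apply: contrapT => nAx.
have [D [CD [Dx AD]]] := sep_pt (Hsub A qA) nAx.
have qD : q D by apply: pq.
by apply: Hn0; rewrite -AD; apply: HI.
Qed.

Lemma UF_pinf : Cultrafilter (C0 Op) pinf.
Proof.
split; first exact: Cfilter_pinf.
move=> q [Hsub Hne Hn0 HI Hup] pq.
apply: seteqI => A; split; last exact: pq.
move=> qA; have [ClA [KA|cA]] := Hsub A qA; last by split => //; exact: Hsub.
have [P [K [OP [AP [PK HK]]]]] := cpt_nbhd (proj2 KA).
have cD : cot (~` P).
  move=> B ClB BP; split => //.
  by apply: (cpt_closed ClB HK) => y /BP /contrapT /PK.
have qD : q (~` P) by apply: pq; split => //; exact: C0_cot (ClC OP) cD.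
exfalso; apply: Hn0.
have -> : set0 = A `&` ~` P.
  by apply: seteqI => y; split => // [[Ay nPy]]; apply: nPy; exact: AP.
exact: HI.
Qed.

Lemma UF_class p : Cultrafilter (C0 Op) p -> p = pinf \/ exists x, p = wmap (C0 Op) x.
Proof.
move=> [[Hsub Hne Hn0 HI Hup] Hmax].
case: (pselect (exists A, p A /\ Kc Op A)) => [[A [pA KA]]|nK].
- right.
  have [x Hx] : exists x, forall B, p B -> B x.
    apply: contrapT => nex.
    have Hall : forall x, exists B, p B /\ ~ B x.
      move=> x; apply: contrapT => nB; apply: nex; exists x => B pB.
      by apply: contrapT => nBx; apply: nB; exists B.
    pose F := fun W => exists B, p B /\ W = ~` B.
    have [l [l1 l2]] := proj2 KA F
      (fun W '(ex_intro B (conj pB E)) => eq_ind_r topO (Op_top (proj1 (Hsub B pB))) E)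
      (fun x _ => match Hall x with ex_intro B (conj pB nBx) =>
          ex_intro _ (~` B) (conj (ex_intro _ B (conj pB erefl)) nBx) end).
    have key : forall l : list (set X), (forall W, List.In W l -> F W) ->
        exists B, p B /\ B `<=` A /\ forall y, B y -> forall W, List.In W l -> ~ W y.
      elim => [|a l' IH] Hl.
        by exists A; split => //; split => // y _ W [].
      have [B [pB [BA HB]]] := IH (fun W HW => Hl W (or_intror HW)).
      have [B' [pB' ->]] := Hl a (or_introl erefl).
      exists (B `&` B'); split; first exact: HI.
      split; first by move=> y [/BA].
      move=> y [By B'y] W [<-|HW] //.
      exact: HB y By W HW.
    have [B [pB [BA HB]]] := key l l1.
    apply: Hn0.
    have <- : B = set0.
      apply: seteqI => y; split => // By.
      have [W [Wl Wy]] := l2 y (BA y By).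
      exact: HB y By W Wl Wy.
    exact: pB.
  exists x; symmetry; apply: (Hmax _ (Cfilter_wmap x)).
  by move=> B pB; split; [exact: Hsub | exact: Hx].
- left; symmetry; apply: (Hmax _ Cfilter_pinf).
  move=> A pA; have [ClA [KA|cA]] := Hsub A pA.
    by exfalso; apply: nK; exists A.
  by split => //; exact: Hsub.
Qed.

Lemma wmap_inj x y : wmap (C0 Op) x = wmap (C0 Op) y -> x = y.
Proof.
move=> E; apply: contrapT => nxy.
have [_ _ _ H4 _] := wb.
have [D [CD [Dx DA]]] := H4 [set y] x (or_introl (ex_intro _ y erefl)) (fun e => nxy e).
have : wmap (C0 Op) y D by rewrite -E; split.
by move=> [_ Dy]; exact: DA y Dy erefl.
Qed.

Lemma wmap_pinf x : wmap (C0 Op) x <> pinf.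
Proof.
move=> E.
have [D [KD [Dx _]]] := LCnbhd gts_opT (I : setT x).
have : pinf D by rewrite -E; split => //; exact: C0_Kc.
by move=> [_ cD]; exact: Kc_not_cot KD cD.
Qed.


Lemma img2 {A B C : Type} (F : set A) (f : A -> B) (k : B -> C) (m : A -> C) :
  (forall a, k (f a) = m a) -> k @` (f @` F) = m @` F.
Proof.
move=> H; apply: seteqI => c; split.
  by move=> [b [a Fa <-] <-]; exists a => //; rewrite H.
by move=> [a Fa <-]; exists (f a); [exists a | rewrite H].
Qed.

Definition ptw x : wallman_pt (C0 Op) := exist _ (wmap (C0 Op) x) (UF_wmap x).
Definition ptinf : wallman_pt (C0 Op) := exist _ pinf UF_pinf.
Definition gmap (o : option X) : wallman_pt (C0 Op) :=
  match o with Some x => ptw x | None => ptinf end.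
Definition hmap (p : wallman_pt (C0 Op)) : option X :=
  match pselect (exists x, proj1_sig p = wmap (C0 Op) x) with
  | left e => Some (proj1_sig (cid e)) | right _ => None end.

Lemma pt_eq (p q : wallman_pt (C0 Op)) : proj1_sig p = proj1_sig q -> p = q.
Proof.
case: p => p Hp; case: q => q Hq /= E; subst q.
by rewrite (Prop_irrelevance Hp Hq).
Qed.

Lemma pt_class (p : wallman_pt (C0 Op)) :
  proj1_sig p = pinf \/ exists x, proj1_sig p = wmap (C0 Op) x.
Proof. exact: UF_class (proj2_sig p). Qed.

Lemma h_w p x : proj1_sig p = wmap (C0 Op) x -> hmap p = Some x.
Proof.
move=> E; rewrite /hmap; case: pselect => [e|n].
  case: cid => y /= Hy; congr Some; apply: wmap_inj; by rewrite -Hy -E.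
by exfalso; apply: n; exists x.
Qed.

Lemma h_inf p : proj1_sig p = pinf -> hmap p = None.
Proof.
move=> E; rewrite /hmap; case: pselect => [[x Hx]|n] //.
by exfalso; apply: (wmap_pinf (x := x)); rewrite -Hx.
Qed.

Lemma p_w p x : proj1_sig p = wmap (C0 Op) x -> p = ptw x.
Proof. by move=> E; apply: pt_eq. Qed.

Lemma p_inf p : proj1_sig p = pinf -> p = ptinf.
Proof. by move=> E; apply: pt_eq. Qed.

Lemma hK : cancel hmap gmap.
Proof.
move=> p; case: (pt_class p) => [E|[x E]].
  by rewrite (h_inf E) (p_inf E).
by rewrite (h_w E) (p_w E).
Qed.

Lemma gK : cancel gmap hmap.
Proof. by case => [x|]; [exact: h_w | exact: h_inf]. Qed.


Lemma wcompact : compact_in (wallman_open (C0 Op)) setT.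
Proof.
rewrite /compact_in => F HF Hcov.
have [U0 [FU0 U0i]] := Hcov ptinf I.
have [A0 [CA0 [nA0 A0U]]] := HF U0 FU0 ptinf U0i.
have KA0 : Kc Op A0.
  by case: (CA0) => [ClA [K|c]] //; exfalso; apply: nA0; rewrite /wbase /=; split.
pose G := fun W => exists B U, C0 Op B /\ F U /\
   ~` wbase (C0 Op) B `<=` U /\ W = ~` B.
have [l [l1 l2]] := proj2 KA0 G
  (fun W '(ex_intro B (ex_intro U (conj CB (conj _ (conj _ E))))) =>
     eq_ind_r topO (Op_top (proj1 CB)) E)
  (fun x _ => match Hcov (ptw x) I with ex_intro U (conj FU Ux) =>
     match HF U FU (ptw x) Ux with ex_intro B (conj CB (conj nB BU)) =>
       ex_intro _ (~` B) (conj (ex_intro _ B (ex_intro _ U (conj CB (conj FU (conj BU erefl)))))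
         (fun Bx => nB (conj CB Bx))) end end).
have key : forall l : list (set X), (forall W, List.In W l -> G W) ->
    exists lu, (forall U, List.In U lu -> F U) /\
      forall W, List.In W l -> exists B U, List.In U lu /\ W = ~` B /\
         ~` wbase (C0 Op) B `<=` U.
  elim => [|a l' IH] Hl.
    by exists nil; split => // W [].
  have [lu [lu1 lu2]] := IH (fun W HW => Hl W (or_intror HW)).
  have [B [U [CB [FU [BU E]]]]] := Hl a (or_introl erefl).
  exists (U :: lu); split.
    by move=> U' [<-|HU'] //; exact: lu1.
  move=> W [<-|HW].
    by exists B, U; split; [left|split].
  have [B' [U' [HU' [E' BU']]]] := lu2 W HW.
  by exists B', U'; split; [right|split].
have [lu [lu1 lu2]] := key l l1.
exists (U0 :: lu); split.
  by move=> U [<-|HU] //; exact: lu1.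
move=> q _.
case: (pt_class q) => [E|[y E]].
  exists U0; split; first by left.
  by apply: A0U => /=; rewrite /wbase /= E; exact: nA0.
case: (pselect (A0 y)) => A0y.
  have [W [Wl Wy]] := l2 y A0y.
  have [B [U [Ulu [EW BU]]]] := lu2 W Wl.
  exists U; split; first by right.
  apply: BU => /=; rewrite /wbase /= E => -[_ By].
  by move: Wy; rewrite EW.
exists U0; split; first by left.
by apply: A0U => /=; rewrite /wbase /= E => -[_ ?].
Qed.

Lemma trace_h U : wtrace (C0 Op) (hmap @^-1` U) = Some @^-1` U.
Proof.
apply: seteqI => x; split.
  by move=> [p [Up Ep]]; rewrite /preimage /= -(h_w Ep).
move=> Ux; exists (ptw x); split => //.
by rewrite /preimage /= (h_w (p := ptw x) erefl).
Qed.

Lemma trace_g V : Some @^-1` (gmap @^-1` V) = wtrace (C0 Op) V.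
Proof.
apply: seteqI => x; split.
  by move=> Vx; exists (ptw x).
by move=> [p [Vp Ep]]; rewrite /preimage /= -(p_w Ep).
Qed.

Lemma h_cont : strictly_continuous (CovS Op Cov (C0 Op)) (CovHat Op Cov) hmap.
Proof.
move=> UU [Hsub HCov]; split.
- move=> W [U UUU <-]; split.
  + case: (Hsub U UUU) => [[V' [OV' ->]]|[K [KK ->]]].
    * move=> p /= [x' V'x' hp].
      case: (pt_class p) => [E|[x E]].
        by rewrite (h_inf E) in hp.
      rewrite (h_w E) in hp; case: hp => ?; subst x'.
      have [D [CD [cD [nDx VD]]]] := cot_nbhd OV' V'x'.
      exists D; split => //; split; first by rewrite /wbase E => [[_ Dx]].
      move=> q /= nq.
      case: (pt_class q) => [Eq|[y Eq]].
        by exfalso; apply: nq; rewrite /wbase Eq.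
      rewrite (h_w Eq); exists y => //.
      apply: contrapT => nV; apply: nq; rewrite /wbase Eq; split => //.
      exact: VD.
    * move=> p /= Hp; exists K; split; first exact: C0_Kc.
      split.
        case: (pt_class p) => [E|[x E]]; rewrite /wbase E.
          by move=> [_ cK]; exact: Kc_not_cot KK cK.
        by move=> [_ Kx]; apply: Hp; rewrite (h_w E); exists x.
      move=> q /= nq [y Ky Ey].
      case: (pt_class q) => [Eq|[z Eq]].
        by rewrite (h_inf Eq) in Ey.
      rewrite (h_w Eq) in Ey; case: Ey => ?; subst z.
      by apply: nq; rewrite /wbase Eq; split => //; exact: C0_Kc.
  + rewrite trace_h.
    case: (Hsub U UUU) => [[V' [OV' ->]]|[K [KK ->]]].
    * have -> : Some @^-1` (Some @` V') = V' => //.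
      apply: seteqI => x; split; last by move=> Vx; exists x.
      by move=> [y Vy [<-]].
    * have -> : Some @^-1` (~` (Some @` K)) = ~` K; last exact: (proj1 KK).
      apply: seteqI => x; split => /= H.
        by move=> Kx; apply: H; exists x.
      by move=> [y Ky [E]]; apply: H; rewrite -E.
- by rewrite (img2 _ (m := fun U => Some @^-1` U)) //; move=> U; exact: trace_h.
Qed.

Lemma g_cont : strictly_continuous (CovHat Op Cov) (CovS Op Cov (C0 Op)) gmap.
Proof.
move=> VV [Hsub HCov]; split.
- move=> W [V VVV <-].
  have [Vo OV] := Hsub V VVV.
  have tg : forall x, V (ptw x) <-> wtrace (C0 Op) V x.
    by move=> x; rewrite -trace_g.
  case: (pselect (V ptinf)) => Vi.
  + right.
    have [A [CA [nA AV]]] := Vo ptinf Vi.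
    have KA : Kc Op A.
      by case: (CA) => [ClA [K|c]] //; exfalso; apply: nA; rewrite /wbase /=; split.
    exists (~` wtrace (C0 Op) V); split.
      have ClK : Cl Op (~` wtrace (C0 Op) V) by rewrite /Cl setCK.
      split => //; apply: (cpt_closed ClK (proj2 KA)) => x nt.
      apply: contrapT => nAx; apply: nt; apply/tg; apply: AV.
      by rewrite /wbase /= => [[_ Ax]].
    apply: seteqI => -[x|] /=.
      rewrite tg; split.
        by move=> H [y ny [E]]; apply: ny; rewrite E.
      by move=> H; apply: contrapT => nt; apply: H; exists x.
    by split => // _ [y _].
  + left; exists (wtrace (C0 Op) V); split => //.
    apply: seteqI => -[x|] /=.
      rewrite tg; split; first by move=> H; exists x.
      by move=> [y Hy [<-]].
    by split => // [[y _]].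
- by rewrite (img2 _ (m := wtrace (C0 Op))) //; move=> V; exact: trace_g.
Qed.

Lemma main :
  (wallman_base topO (C0 Op) /\
   (forall x, Cultrafilter (C0 Op) (wmap (C0 Op) x)) /\
   compact_in (wallman_open (C0 Op)) setT) /\
  (exists (h : wallman_pt (C0 Op) -> option X) (g : option X -> wallman_pt (C0 Op)),
     [/\ cancel h g, cancel g h,
         strictly_continuous (CovS Op Cov (C0 Op)) (CovHat Op Cov) h,
         strictly_continuous (CovHat Op Cov) (CovS Op Cov (C0 Op)) g &
         forall x p, proj1_sig p = wmap (C0 Op) x -> h p = Some x]).
Proof.
split; first by split; [exact: wb | split; [exact: UF_wmap | exact: wcompact]].
exists hmap, gmap; split.
- exact: hK.
- exact: gK.
- exact: h_cont.
- exact: g_cont.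
- by move=> x p; exact: h_w.
Qed.

End S.

Theorem proposition7p14 (X : Type) (Op : set (set X)) (Cov : set (set (set X))) :
  is_gts Op Cov ->
  weakly_normal Op ->
  locally_compact (top_open Op) ->
  ~ compact_in (top_open Op) setT ->
  (* (i) *)
  (wallman_base (top_open Op) (C0 Op) /\
   (forall x, Cultrafilter (C0 Op) (wmap (C0 Op) x)) /\
   compact_in (wallman_open (C0 Op)) setT) /\
  (* (ii) *)
  (exists (h : wallman_pt (C0 Op) -> option X) (g : option X -> wallman_pt (C0 Op)),
     [/\ cancel h g, cancel g h,
         strictly_continuous (CovS Op Cov (C0 Op)) (CovHat Op Cov) h,
         strictly_continuous (CovHat Op Cov) (CovS Op Cov (C0 Op)) g &
         forall x p, proj1_sig p = wmap (C0 Op) x -> h p = Some x]).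
Proof.
move=> Hg Hwn Hlc Hnc.
exact: (main Hg Hwn Hlc Hnc).
Qed.
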